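(* Let $S,T$ be semigroups and $f:S\to T$ a surjective semigroup homomorphism. If $S$ is an inverse semigroup whose semilattice of idempotents $E(S)$ is well-founded, then $T$ is an inverse semigroup whose semilattice of idempotents $E(T)$ is well-founded.
   Context: An inverse semigroup is a semigroup in which every element $a$ has a unique $b$ with $aba=a$ and $bab=b$. Its idempotents $E(S)$ form a commutative subsemigroup (semilattice) ordered by $e\le f$ iff $ef=e$; it is well-founded if every nonempty subset has a minimal element. *)

(* Defs.v *)
Definition sg_assoc {S : Type} (m : S -> S -> S) : Prop :=
  forall x y z, m x (m y z) = m (m x y) z.

Definition sg_hom {S T : Type} (mS : S -> S -> S) (mT : T -> T -> T) (f : S -> T) : Prop :=
  forall x y, f (mS x y) = mT (f x) (f y).

Definition is_inverse_semigroup {S : Type} (m : S -> S -> S) : Prop :=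
  forall a : S, exists! b : S, m (m a b) a = a /\ m (m b a) b = b.

Definition idempotent {S : Type} (m : S -> S -> S) (e : S) : Prop := m e e = e.

Definition E_le {S : Type} (m : S -> S -> S) (e f : S) : Prop := m e f = e.

Definition E_well_founded {S : Type} (m : S -> S -> S) : Prop :=
  forall A : S -> Prop,
    (exists e, idempotent m e /\ A e) ->
    exists e, idempotent m e /\ A e /\
      forall g, idempotent m g -> A g -> E_le m g e -> g = e.

(* Main.v *)
Require Import Defs.
From Stdlib Require Import Setoid.

Ltac rn HS := repeat rewrite <- HS.

Lemma idem_r {S} (m : S -> S -> S) (HS : sg_assoc m) e z :
  idempotent m e -> m e (m e z) = m e z.
Proof. intro He. rewrite HS. now rewrite He. Qed.

Lemma inv_uniq {S} (m : S -> S -> S) (Hinv : is_inverse_semigroup m) a c d :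
  m (m a c) a = a /\ m (m c a) c = c ->
  m (m a d) a = a /\ m (m d a) d = d -> c = d.
Proof.
  intros Hc Hd. destruct (Hinv a) as [b [_ Hu]].
  rewrite <- (Hu c Hc). exact (Hu d Hd).
Qed.

Lemma prod_idem {S} (m : S -> S -> S) (HS : sg_assoc m)
  (Hinv : is_inverse_semigroup m) e f :
  idempotent m e -> idempotent m f -> idempotent m (m e f).
Proof.
  intros He Hf. destruct (Hinv (m e f)) as [x [[Hx1 Hx2] _]].
  assert (H1 : m e (m f (m x (m e f))) = m e f) by (rewrite <- Hx1 at 2; now rn HS).
  assert (H2 : m x (m e (m f x)) = x) by (rewrite <- Hx2 at 3; now rn HS).
  assert (H3 : m x (m e (m f (m x e))) = m x e).
  { transitivity (m (m x (m e (m f x))) e); [now rn HS | now rewrite H2]. }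
  assert (Hy : x = m f (m x e)).
  { apply (inv_uniq m Hinv (m e f)); split; auto.
    - rn HS. rewrite (idem_r m HS f _ Hf), (idem_r m HS e _ He). exact H1.
    - rn HS. rewrite (idem_r m HS e _ He), (idem_r m HS f _ Hf). now rewrite H3. }
  assert (Hxx : idempotent m x).
  { unfold idempotent. rewrite Hy at 1 2. rn HS. now rewrite H3, <- Hy. }
  assert (Hef : m e f = x).
  { apply (inv_uniq m Hinv x); split.
    - exact Hx2.
    - exact Hx1.
    - unfold idempotent in Hxx. now rewrite !Hxx.
    - unfold idempotent in Hxx. now rewrite !Hxx. }
  rewrite Hef. exact Hxx.
Qed.

Lemma idem_comm {S} (m : S -> S -> S) (HS : sg_assoc m)
  (Hinv : is_inverse_semigroup m) e f :
  idempotent m e -> idempotent m f -> m e f = m f e.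
Proof.
  intros He Hf.
  pose proof (prod_idem m HS Hinv e f He Hf) as E1.
  pose proof (prod_idem m HS Hinv f e Hf He) as E2.
  unfold idempotent in E1, E2.
  assert (E1' : m e (m f (m e f)) = m e f) by (rewrite <- E1 at 2; now rn HS).
  assert (E2' : m f (m e (m f e)) = m f e) by (rewrite <- E2 at 2; now rn HS).
  apply (inv_uniq m Hinv (m e f)); split.
  - now rewrite !E1.
  - now rewrite !E1.
  - rn HS. rewrite (idem_r m HS f _ Hf), (idem_r m HS e _ He). exact E1'.
  - rn HS. rewrite (idem_r m HS e _ He), (idem_r m HS f _ Hf). exact E2'.
Qed.

Lemma inv_uniq_comm {T} (m : T -> T -> T) (HT : sg_assoc m)
  (Hc : forall u v, idempotent m u -> idempotent m v -> m u v = m v u) a b c :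
  m (m a b) a = a /\ m (m b a) b = b ->
  m (m a c) a = a /\ m (m c a) c = c -> b = c.
Proof.
  intros [Hb1 Hb2] [Hc1 Hc2].
  assert (Iba : idempotent m (m b a)) by (unfold idempotent; now rewrite HT, Hb2).
  assert (Ica : idempotent m (m c a)) by (unfold idempotent; now rewrite HT, Hc2).
  assert (Iab : idempotent m (m a b)) by (unfold idempotent; now rewrite HT, Hb1).
  assert (Iac : idempotent m (m a c)) by (unfold idempotent; now rewrite HT, Hc1).
  transitivity (m (m c a) b).
  - transitivity (m (m (m b a) (m c a)) b).
    + rewrite <- Hb2 at 1. rewrite <- Hc1 at 1. now repeat rewrite <- HT.
    + rewrite (Hc _ _ Iba Ica).
      transitivity (m (m c a) (m (m b a) b)); [now repeat rewrite <- HT | now rewrite Hb2].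
  - symmetry. transitivity (m c (m (m a b) (m a c))).
    + rewrite <- Hc2 at 1. rewrite <- Hb1 at 1. now repeat rewrite <- HT.
    + rewrite (Hc _ _ Iab Iac).
      transitivity (m (m (m c a) c) (m a b)); [now repeat rewrite <- HT | rewrite Hc2; now repeat rewrite <- HT].
Qed.

Lemma lallement (S T : Type) (mS : S -> S -> S) (mT : T -> T -> T)
  (HS : sg_assoc mS) (f : S -> T) (Hf : sg_hom mS mT f)
  (Hinv : is_inverse_semigroup mS) a :
  idempotent mT (f a) -> exists g, idempotent mS g /\ f g = f a.
Proof.
  intro He. destruct (Hinv (mS a a)) as [b [[Hb1 Hb2] _]].
  exists (mS (mS a b) a). split.
  - unfold idempotent.
    transitivity (mS (mS a (mS (mS b (mS a a)) b)) a); [now repeat rewrite <- HS|].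
    now rewrite Hb2.
  - transitivity (f (mS (mS (mS a a) b) (mS a a))).
    + rewrite !Hf. unfold idempotent in He. now rewrite !He.
    + rewrite Hb1, Hf. exact He.
Qed.

Theorem mainTheorem14 (S T : Type) (mS : S -> S -> S) (mT : T -> T -> T)
  (HS : sg_assoc mS) (HT : sg_assoc mT)
  (f : S -> T) (Hf : sg_hom mS mT f) (Hsurj : forall t : T, exists s : S, f s = t)
  (Hinv : is_inverse_semigroup mS) (Hwf : E_well_founded mS) :
  is_inverse_semigroup mT /\ E_well_founded mT.
Proof.
  assert (Lift : forall u, idempotent mT u -> exists g, idempotent mS g /\ f g = u).
  { intros u Hu. destruct (Hsurj u) as [a <-].
    exact (lallement S T mS mT HS f Hf Hinv a Hu). }
  assert (Hc : forall u v, idempotent mT u -> idempotent mT v -> mT u v = mT v u).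
  { intros u v Hu Hv. destruct (Lift u Hu) as [g [Hg <-]].
    destruct (Lift v Hv) as [h [Hh <-]].
    rewrite <- !Hf. now rewrite (idem_comm mS HS Hinv g h Hg Hh). }
  split.
  - intro t. destruct (Hsurj t) as [s <-].
    destruct (Hinv s) as [s' [[H1 H2] _]].
    exists (f s'). split.
    + split; rewrite <- !Hf; congruence.
    + intros c Hcc. apply (inv_uniq_comm mT HT Hc (f s)); auto.
      split; rewrite <- !Hf; congruence.
  - intros A [e0 [He0 HA0]].
    destruct (Lift e0 He0) as [g0 [Hg0 Hfg0]].
    destruct (Hwf (fun g => A (f g))) as [g [Hg [HAg Hmin]]].
    { exists g0. split; auto. now rewrite Hfg0. }
    exists (f g). split; [unfold idempotent; now rewrite <- Hf, Hg|]. split; auto.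
    intros u Hu HAu Hle. destruct (Lift u Hu) as [g1 [Hg1 <-]].
    unfold E_le in Hle. rewrite <- Hf in Hle.
    assert (Hgg : mS g1 g = g).
    { apply Hmin.
      - exact (prod_idem mS HS Hinv g1 g Hg1 Hg).
      - now rewrite Hle.
      - unfold E_le. rewrite <- HS. unfold idempotent in Hg. now rewrite Hg. }
    rewrite <- Hle. now rewrite Hgg.
Qed.
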